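(* Let $\mathcal{D}$ be a set, $\Sigma$ a finite set, $R\subseteq\mathcal{D}^\Sigma$ and $k\ge0$ an integer. Then $R$ admits a $k$-key if and only if $|R|\le|\mathcal{D}|^k$ (cardinal arithmetic when $\mathcal{D}$ is infinite).
   Context: For $R\subseteq\mathcal{D}^\Sigma$ and $\Lambda\subseteq\Sigma$, $\pi_\Lambda R=\{a|_\Lambda:a\in R\}$. For a relation $S\subseteq\mathcal{D}^{\Omega}$, a proper subset $\textup{K}\subset\Omega$ is a $k$-key of $S$ if $|\textup{K}|=k$ and for all $a,b\in S$, $a|_{\textup{K}}=b|_{\textup{K}}$ implies $a=b$. $R\subseteq\mathcal{D}^\Sigma$ admits a $k$-key if there exist a finite set $\textup{T}$ with $\textup{T}\cap\Sigma=\emptyset$ and $\widehat R\subseteq\mathcal{D}^{\textup{T}\cup\Sigma}$ having a $k$-key such that $R=\pi_\Sigma\widehat R$. *)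

(* Defs.v *)
From mathcomp Require Import all_boot.
From mathcomp Require Import boolp classical_sets cardinality.
Set Implicit Arguments. Unset Strict Implicit. Unset Printing Implicit Defensive.
Local Open Scope classical_set_scope.

Definition proj_Sigma (D : Type) (T Sigma : finType) (Rh : set (T + Sigma -> D))
  : set (Sigma -> D) := (fun a => fun s => a (inr s)) @` Rh.

Definition is_key (D : Type) (Omega : finType) (k : nat) (S : set (Omega -> D))
  (K : {set Omega}) : Prop :=
  [/\ K \proper [set: Omega], #|K| = k &
      forall a b, S a -> S b -> (forall x, x \in K -> a x = b x) -> a = b].

Definition has_key (D : Type) (Omega : finType) (k : nat) (S : set (Omega -> D)) :=
  exists K : {set Omega}, is_key k S K.

(* R admits a k-key: there is a finite set T disjoint from Sigma (modelled as the
   left summand of the disjoint union T + Sigma) and Rh ⊆ D^(T ⊔ Sigma) having a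
   k-key with R = pi_Sigma Rh. *)
Definition admits_key (D : Type) (Sigma : finType) (k : nat) (R : set (Sigma -> D)) :=
  exists (T : finType) (Rh : set (T + Sigma -> D)),
    has_key k Rh /\ R = proj_Sigma Rh.

(* Main.v *)
Require Import Defs.
From mathcomp Require Import all_boot.
From mathcomp Require Import boolp classical_sets cardinality.
Local Open Scope classical_set_scope.

Section Aux.
Local Open Scope card_scope.

Lemma fwd (D : Type) (Sigma : finType) (R : set (Sigma -> D)) (k : nat) :
  admits_key k R -> (R #<= [set: 'I_k -> D]).
Proof.
move=> [T [Rh [[K [_ HK Hkey]] ->]]].
apply/card_leP; apply/injfunPex.
pose g (a : T + Sigma -> D) : 'I_k -> D :=
  fun i => a (enum_val (cast_ord (esym HK) i)).
have pre : forall r : set_type (proj_Sigma Rh),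
    {a | Rh a /\ (fun s => a (inr s)) = val r}.
  move=> r; apply: cid; case: (set_mem (valP r)) => a Ha E; by exists a.
exists (fun r => SigSub (@mem_set _ [set: 'I_k -> D] (g (proj1_sig (pre r))) I)).
  by [].
move=> r1 r2 _ _ /(congr1 val) /= Hg.
case: (pre r1) Hg => a1 [Ha1 E1]; case: (pre r2) => a2 [Ha2 E2] /= Hg.
apply: val_inj; rewrite -E1 -E2.
have -> // : a1 = a2.
apply: Hkey => // x xK.
have := congr1 (fun h => h (cast_ord HK (enum_rank_in xK x))) Hg.
by rewrite /g /= cast_ordK enum_rankK_in.
Qed.

Lemma bwd (D : Type) (Sigma : finType) (R : set (Sigma -> D)) (k : nat)
  (D_nonempty : inhabited D) :
  (R #<= [set: 'I_k -> D]) -> admits_key k R.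
Proof.
case: D_nonempty => d0.
move=> /card_leP /injfunPex [F _ Finj].
pose f (r : set_type R) : 'I_k -> D := val (F r).
have finj : forall r1 r2, f r1 = f r2 -> r1 = r2.
  move=> r1 r2 E; apply: Finj; rewrite ?inE //; exact: val_inj.
exists (option 'I_k : finType).
pose Rh (a : option 'I_k + Sigma -> D) : Prop :=
  exists H : R (fun s => a (inr s)),
    (forall i, a (inl (Some i)) = f (SigSub (mem_set H)) i) /\ a (inl None) = d0.
exists Rh; split.
  exists [set inl (Some i) | i : 'I_k]; split.
  - apply/properP; split.
      by apply/fintype.subsetP => x _; apply/mem_set.
    exists (inl None); first by apply/mem_set.
    by apply/imsetP => -[i _].
  - by rewrite card_imset ?card_ord // => i j [].
  - move=> a b [Ha [Ea Na]] [Hb [Eb Nb]] Hab.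
    have Hf : f (SigSub (mem_set Ha)) = f (SigSub (mem_set Hb)).
      apply/funext => i; rewrite -Ea -Eb; apply: Hab.
      by apply/imsetP; exists i.
    have /(congr1 val) /= Er := finj _ _ Hf.
    apply/funext => -[[i|]|s] //.
    + by rewrite Ea Eb Hf.
    + by rewrite Na Nb.
    + by have := congr1 (fun h => h s) Er.
apply/seteqP; split => r.
  move=> Hr.
  pose a (x : option 'I_k + Sigma) : D :=
    match x with inl (Some i) => f (SigSub (mem_set Hr)) i
               | inl None => d0 | inr s => r s end.
  exists a => //.
  have Hr' : R (fun s => a (inr s)) by [].
  exists Hr'; split => // i /=.
  congr (f _ i); exact: val_inj.
by case=> a [Ha _] <-.
Qed.
End Aux.

Theorem lemma20 (D : Type) (Sigma : finType) (R : set (Sigma -> D)) (k : nat)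
  (D_nonempty : inhabited D) :
  admits_key k R <-> (R #<= [set: 'I_k -> D])%card.
Proof.
split; [exact: fwd | exact: bwd].
Qed.
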